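(* Let $V_1,V_2\subset\mathbb R^n\setminus\{0\}$ be finite disjoint sets such that no element of $V_1\cup V_2$ is a positive multiple of another, and suppose $\operatorname{pos}V_1\cap\operatorname{pos}V_2\neq\{0\}$. Then there exist $V_1'\subseteq V_1$ and $V_2'\subseteq V_2$ such that $(\operatorname{pos}V_1'\cap\operatorname{pos}V_2')\setminus\{0\}$ is exactly one open ray from the origin, this ray is contained in the relative interior of both $\operatorname{pos}V_1'$ and $\operatorname{pos}V_2'$, and $V_1'\cup V_2'$ is separated from $0$ (i.e. $0\notin\operatorname{conv}(V_1'\cup V_2')$).
   Context: $\operatorname{pos}A$ denotes the positive hull of $A$, the set of all nonnegative linear combinations of elements of $A$. *)

(* Defs.v *)
From HB Require Import structures.
From mathcomp Require Import all_boot all_order all_algebra.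
From mathcomp Require Import reals.
Set Implicit Arguments. Unset Strict Implicit. Unset Printing Implicit Defensive.
Import Order.TTheory GRing.Theory Num.Theory.
Local Open Scope ring_scope.

Section Cones.
Variables (R : realType) (n : nat).
Local Notation V := 'rV[R]_n.

Definition pos (s : seq V) (v : V) : Prop :=
  exists c : V -> R, (forall x, 0 <= c x) /\ v = \sum_(x <- undup s) c x *: x.

Definition conv (s : seq V) (v : V) : Prop :=
  exists c : V -> R, (forall x, 0 <= c x) /\
    \sum_(x <- undup s) c x = 1 /\ v = \sum_(x <- undup s) c x *: x.

Definition aff (C : V -> Prop) (v : V) : Prop :=
  exists (s : seq V) (c : V -> R), (forall x, x \in s -> C x) /\
    \sum_(x <- s) c x = 1 /\ v = \sum_(x <- s) c x *: x.

Definition sqdist (x y : V) : R := \sum_(i < n) ((x - y) 0 i) ^+ 2.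

Definition relint (C : V -> Prop) (x : V) : Prop :=
  C x /\ exists eps : R, 0 < eps /\
    forall y, aff C y -> sqdist y x < eps ^+ 2 -> C y.

End Cones.

(* Main.v *)
Require Import Defs.
From HB Require Import structures.
From mathcomp Require Import all_boot all_order all_algebra.
From mathcomp Require Import reals.
From mathcomp Require Import ring lra zify.
From Stdlib Require Import Classical.
Import Order.TTheory GRing.Theory Num.Theory.
Set Implicit Arguments. Unset Strict Implicit.
Local Open Scope ring_scope.

Lemma minratio (T : eqType) (R : realFieldType) (s : seq T) (p q : T -> R) :
  (forall x, x \in s -> 0 < p x) -> (exists2 x, x \in s & 0 < q x) ->
  exists t, 0 < t /\ (forall x, x \in s -> 0 <= p x - t * q x) /\
     exists2 x, x \in s & p x - t * q x = 0.
Proof.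
elim: s => [|y s IH] Hp [x0]; first by [].
have Hy : 0 < p y by apply: Hp; rewrite inE eqxx.
have Hp' : forall x, x \in s -> 0 < p x by move=> x xs; apply: Hp; rewrite inE xs orbT.
case: (classic (exists2 x, x \in s & 0 < q x)) => [Hex|Hnex] Hx0 Hq0.
- have [t [t0 [Ht [x1 x1s Hx1]]]] := IH Hp' Hex.
  have [qy0|qy0] := leP (q y) 0.
  + exists t; split=> //; split.
      move=> x; rewrite inE => /orP [/eqP->|xs]; last by apply: Ht.
      have: 0 <= t * - q y by apply: mulr_ge0; lra.
      lra.
    by exists x1 => //; rewrite inE x1s orbT.
  + have [le|lt] := leP t (p y / q y).
    * exists t; split=> //; split.
        move=> x; rewrite inE => /orP [/eqP->|xs]; last by apply: Ht.
        rewrite subr_ge0 -ler_pdivlMr //.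
      by exists x1 => //; rewrite inE x1s orbT.
    * exists (p y / q y); split; first by apply: divr_gt0.
      split; last first.
        exists y; first by rewrite inE eqxx.
        by rewrite mulrAC -mulrA divff ?mulr1 ?subrr // gt_eqF.
      move=> x; rewrite inE => /orP [/eqP->|xs].
        by rewrite mulrAC -mulrA divff ?mulr1 ?subrr // gt_eqF.
      have := Ht x xs; have [qx0|qx0] := leP (q x) 0.
        have: 0 <= p y / q y * - q x by apply: mulr_ge0; [apply: ltW; apply: divr_gt0 |lra].
        have := Hp' x xs. lra.
      have: p y / q y * q x <= t * q x by apply: ler_wpM2r; [apply: ltW|apply: ltW].
      lra.
- have qy : 0 < q y.
    move: Hx0; rewrite inE => /orP [/eqP<-//|xs].
    by exfalso; apply: Hnex; exists x0.
  exists (p y / q y); split; first by apply: divr_gt0.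
  split; last first.
    exists y; first by rewrite inE eqxx.
    by rewrite mulrAC -mulrA divff ?mulr1 ?subrr // gt_eqF.
  move=> x; rewrite inE => /orP [/eqP->|xs].
    by rewrite mulrAC -mulrA divff ?mulr1 ?subrr // gt_eqF.
  have qx0 : q x <= 0 by rewrite leNgt; apply/negP => H; apply: Hnex; exists x.
  have: 0 <= p y / q y * - q x by apply: mulr_ge0; [apply: ltW; apply: divr_gt0 |lra].
  have := Hp' x xs. lra.
Qed.
Arguments minratio {T R s p q}.

Section Comb.
Variables (R : realType) (n : nat).
Local Notation V := 'rV[R]_n.

Definition comb (s : seq V) (f : V -> R) : V := \sum_(x <- s) f x *: x.

Lemma comb_lin s f g t : comb s (fun x => f x - t * g x) = comb s f - t *: comb s g.
Proof.
rewrite /comb scaler_sumr -sumrB; apply: eq_bigr => x _.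
by rewrite scalerBl scalerA.
Qed.

Lemma comb_eq s f g : (forall x, x \in s -> f x = g x) -> comb s f = comb s g.
Proof. by move=> H; rewrite /comb big_seq_cond [RHS]big_seq_cond; apply: eq_bigr => x /andP[xs _]; rewrite H. Qed.

Lemma comb_filter s z : (forall x, x \in s -> 0 <= z x) ->
  comb [seq x <- s | (0 < z x)%R] z = comb s z.
Proof.
move=> H; rewrite /comb big_filter big_mkcond big_seq [RHS]big_seq.
apply: eq_bigr => x xs; case: ifP => // /negbT; rewrite -leNgt => h.
have -> : z x = 0 by apply/eqP; rewrite eq_le h H.
by rewrite scale0r.
Qed.

Lemma size_filter_lt (s : seq V) (z : V -> R) : (exists2 x, x \in s & z x = 0) ->
  (size [seq x <- s | (0 < z x)%R] < size s)%N.
Proof.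
move=> [x xs zx]; rewrite size_filter -(count_predC (fun x => 0 < z x) s).
rewrite -[X in (X < _)%N]addn0 ltn_add2l -has_count.
by apply/hasP; exists x => //=; rewrite zx ltxx.
Qed.

Lemma comb_nonempty s f : comb s f != 0 -> exists y, y \in s.
Proof. by case: s => [|y s]; [rewrite /comb big_nil eqxx | exists y; rewrite inE eqxx]. Qed.


Lemma comb_opp s f : comb s (fun x => - f x) = - comb s f.
Proof. by rewrite /comb -sumrN; apply: eq_bigr => x _; rewrite scaleNr. Qed.

Variables (V1 V2 : seq V).
Hypothesis Hdisj : forall x, x \in V1 -> x \notin V2.

Record Conf s1 s2 (c : V -> R) : Prop := ConfI {
  cf1 : uniq s1; cf2 : uniq s2; cf3 : {subset s1 <= V1};
  cf4 : {subset s2 <= V2}; cf5 : forall x, x \in s1 ++ s2 -> 0 < c x;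
  cf6 : comb s1 c = comb s2 c; cf7 : comb s1 c != 0 }.

Definition KP s1 s2 (c : V -> R) := forall g, comb s1 g = comb s2 g ->
  exists k, forall x, x \in s1 ++ s2 -> g x = k * c x.

Lemma step s1 s2 c : Conf s1 s2 c -> ~ KP s1 s2 c ->
  exists s1' s2' c', Conf s1' s2' c' /\ (size s1' + size s2' < size s1 + size s2)%N.
Proof.
case=> u1 u2 sub1 sub2 cpos ceq cne0 nKP.
have [g [geq gnp]] : exists g, comb s1 g = comb s2 g /\
    forall k, exists2 x, x \in s1 ++ s2 & g x != k * c x.
  apply: NNPP => H; apply: nKP => g geq; apply: NNPP => H2; apply: H.
  exists g; split=> // k; apply: NNPP => H3; apply: H2; exists k => x xs.
  by apply/eqP; apply: NNPP => H4; apply: H3; exists x => //; apply/negP.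
have [h [heq [hnp [x0 x0s hx0]]]] : exists h, comb s1 h = comb s2 h /\
    (forall k, exists2 x, x \in s1 ++ s2 & h x != k * c x) /\
    exists2 x, x \in s1 ++ s2 & 0 < h x.
  have [x xs gx] := gnp 0; rewrite mul0r in gx.
  have [gp|gn] := ltP 0 (g x).
    by exists g; split=> //; split=> //; exists x.
  exists (fun x => - g x); split; first by rewrite !comb_opp geq.
  split; last by exists x => //; rewrite oppr_gt0 lt_neqAle gx gn.
  move=> k; have [y ys gy] := gnp (- k); exists y => //.
  by apply: contra gy => /eqP h; rewrite -[g y]opprK /= h mulNr.
have [t [t0 [Ht [x1 x1s Hx1]]]] := minratio cpos (ex_intro2 _ _ x0 x0s hx0).
set z := fun x => c x - t * h x.
have zeq : comb s1 z = comb s2 z.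
  by rewrite /z (comb_lin s1 c h t) (comb_lin s2 c h t) heq ceq.
have Hz1 : forall x, x \in s1 -> 0 <= z x by move=> x xs; apply: Ht; rewrite mem_cat xs.
have Hz2 : forall x, x \in s2 -> 0 <= z x by move=> x xs; apply: Ht; rewrite mem_cat xs orbT.
have dis12 : forall x, x \in s2 -> x \notin s1.
  move=> x xs2; apply/negP => xs1; move: (Hdisj (sub1 _ xs1)).
  by rewrite (sub2 _ xs2).
have dis21 : forall x, x \in s1 -> x \notin s2.
  by move=> x xs1; apply/negP => xs2; move: (dis12 _ xs2); rewrite xs1.
have [z0|zn0] := eqVneq (comb s1 z) 0; last first.
  exists [seq x <- s1 | (0 < z x)%R], [seq x <- s2 | (0 < z x)%R], z; split.
    constructor.
    - exact: filter_uniq.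
    - exact: filter_uniq.
    - by move=> x; rewrite mem_filter => /andP[_ /sub1].
    - by move=> x; rewrite mem_filter => /andP[_ /sub2].
    - by move=> x; rewrite mem_cat !mem_filter => /orP[/andP[]|/andP[]].
    - by rewrite !comb_filter.
    - by rewrite comb_filter.
  have le1 : (size [seq x <- s1 | (0 < z x)%R] <= size s1)%N by rewrite size_filter count_size.
  have le2 : (size [seq x <- s2 | (0 < z x)%R] <= size s2)%N by rewrite size_filter count_size.
  move: x1s; rewrite mem_cat => /orP[x1s|x1s].
    have := @size_filter_lt _ z (ex_intro2 _ _ x1 x1s Hx1).
    by move=> ?; rewrite -addSn; apply: leq_add.
  have := @size_filter_lt _ z (ex_intro2 _ _ x1 x1s Hx1).
  by move=> ?; rewrite -addnS; apply: leq_add.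
have [x2 x2s zx2] : exists2 x, x \in s1 ++ s2 & 0 < z x.
  apply: NNPP => H; have [y ys hy] := hnp t^-1; apply/negP: hy; rewrite negbK.
  have : z y = 0.
    apply/eqP; rewrite eq_le Ht // andbT leNgt; apply/negP => zy.
    by apply: H; exists y.
  rewrite /z => /eqP; rewrite subr_eq0 => /eqP ->.
  by rewrite mulrA mulVf ?mul1r // gt_eqF.
move: x2s; rewrite mem_cat => /orP[x2s|x2s].
- set q := fun x => if x \in s1 then z x else 0.
  have q0 : comb s1 q = 0 by rewrite -z0; apply: comb_eq => x xs; rewrite /q xs.
  have cpos1 : forall x, x \in s1 -> 0 < c x by move=> x xs; apply: cpos; rewrite mem_cat xs.
  have hq : exists2 x, x \in s1 & 0 < q x by exists x2 => //; rewrite /q x2s.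
  have [t2 [t20 [Ht2 [x3 x3s Hx3]]]] := minratio cpos1 hq.
  set c' := fun x => c x - t2 * q x.
  have c'2 : forall x, x \in s2 -> c' x = c x.
    by move=> x xs; rewrite /c' /q (negbTE (dis12 _ xs)) mulr0 subr0.
  have ec1 : comb s1 c' = comb s1 c by rewrite comb_lin q0 scaler0 subr0.
  exists [seq x <- s1 | (0 < c' x)%R], s2, c'; split.
    constructor=> //.
    - exact: filter_uniq.
    - by move=> x; rewrite mem_filter => /andP[_ /sub1].
    - move=> x; rewrite mem_cat mem_filter => /orP[/andP[]//|xs].
      by rewrite c'2 //; apply: cpos; rewrite mem_cat xs orbT.
    - by rewrite comb_filter // ec1 ceq; apply: comb_eq => x xs; rewrite c'2.
    - by rewrite comb_filter // ec1.
  by rewrite ltn_add2r; apply: size_filter_lt; exists x3.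
- set q := fun x => if x \in s2 then z x else 0.
  have q0 : comb s2 q = 0 by rewrite -z0 zeq; apply: comb_eq => x xs; rewrite /q xs.
  have cpos2 : forall x, x \in s2 -> 0 < c x by move=> x xs; apply: cpos; rewrite mem_cat xs orbT.
  have hq : exists2 x, x \in s2 & 0 < q x by exists x2 => //; rewrite /q x2s.
  have [t2 [t20 [Ht2 [x3 x3s Hx3]]]] := minratio cpos2 hq.
  set c' := fun x => c x - t2 * q x.
  have c'1 : forall x, x \in s1 -> c' x = c x.
    by move=> x xs; rewrite /c' /q (negbTE (dis21 _ xs)) mulr0 subr0.
  have ec2 : comb s2 c' = comb s2 c by rewrite comb_lin q0 scaler0 subr0.
  have ec1 : comb s1 c' = comb s1 c by apply: comb_eq.
  exists s1, [seq x <- s2 | (0 < c' x)%R], c'; split.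
    constructor=> //.
    - exact: filter_uniq.
    - by move=> x; rewrite mem_filter => /andP[_ /sub2].
    - move=> x; rewrite mem_cat mem_filter => /orP[xs|/andP[]//].
      by rewrite c'1 //; apply: cpos; rewrite mem_cat xs.
    - by rewrite comb_filter // ec1 ceq ec2.
    - by rewrite ec1.
  by rewrite ltn_add2l; apply: size_filter_lt; exists x3.
Qed.

Lemma exists_good N s1 s2 c : (size s1 + size s2 <= N)%N -> Conf s1 s2 c ->
  exists s1' s2' c', Conf s1' s2' c' /\ KP s1' s2' c'.
Proof.
elim: N s1 s2 c => [|N IH] s1 s2 c hN hC.
  case: hC => _ _ _ _ _ _; move: hN; case: s1 => //= _.
  by rewrite /comb big_nil eqxx.
case: (classic (KP s1 s2 c)) => [hK|hK]; first by exists s1, s2, c.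
have [s1' [s2' [c' [hC' hs]]]] := step hC hK.
by apply: (IH s1' s2' c') => //; rewrite -ltnS; apply: leq_trans hs hN.
Qed.

End Comb.

Section RI.
Variables (R : realType) (n : nat).
Local Notation V := 'rV[R]_n.

Definition indep (s : seq V) := forall g, comb s g = 0 -> forall x, x \in s -> g x = 0.

Lemma pos_comb (s : seq V) f : uniq s -> (forall x, x \in s -> 0 <= f x) -> pos s (comb s f).
Proof.
move=> us hf; exists (fun x => Num.max (f x) 0); split.
  by move=> x; rewrite le_max lexx orbT.
rewrite undup_id //; apply: comb_eq => x xs; rewrite max_l //; exact: hf.
Qed.

Lemma comb_add (s : seq V) f g a : comb s (fun z => a * f z + g z) = a *: comb s f + comb s g.
Proof.
rewrite /comb scaler_sumr -big_split; apply: eq_bigr => x _.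
by rewrite scalerDl scalerA.
Qed.

Lemma spn_aff (s : seq V) y : uniq s -> aff (pos s) y -> exists g, y = comb s g.
Proof.
move=> us [l [c [hl [_ ->]]]]; elim: l hl => [|x l IH] hl.
  by exists (fun _ => 0); rewrite big_nil /comb big1 // => x _; rewrite scale0r.
have [g' eg'] := IH (fun z zl => hl z (mem_behead (s:=x::l) zl)).
have [f [_ ef]] := hl x (mem_head x l).
exists (fun z => c x * f z + g' z); rewrite comb_add big_cons eg' ef.
by rewrite undup_id.
Qed.

Lemma min_pos (s : seq V) (a : V -> R) : (forall x, x \in s -> 0 < a x) ->
  exists m, 0 < m /\ forall x, x \in s -> m <= a x.
Proof.
elim: s => [|y s IH] ha; first by exists 1; split.
have [m [m0 hm]] := IH (fun x xs => ha x (mem_behead (s:=y::s) xs)).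
have ay := ha y (mem_head y s).
have [lt|le] := ltP (a y) m.
  exists (a y); split=> // x; rewrite inE => /orP[/eqP->//|xs].
  by apply: ltW; apply: lt_le_trans lt (hm x xs).
exists m; split=> // x; rewrite inE => /orP[/eqP->//|xs]; exact: hm.
Qed.

Lemma relint_comb (s : seq V) a : uniq s -> indep s -> (forall x, x \in s -> 0 < a x) ->
  relint (pos s) (comb s a).
Proof.
move=> us hind ha; split; first by apply: pos_comb => // x xs; apply: ltW; apply: ha.
pose k := size s.
pose M : 'M[R]_(k, n) := \matrix_(i, j) (nth 0 s i) 0 j.
have combM : forall g, comb s g = (\row_(i < k) g (nth 0 s i)) *m M.
  move=> g; rewrite mulmx_sum_row /comb (big_nth 0) big_mkord; apply: eq_bigr => i _.
  rewrite mxE; congr (_ *: _); apply/rowP => j; rewrite !mxE //.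
have rf : row_free M.
  rewrite -kermx_eq0; apply/eqP/row_matrixP => i; rewrite row0.
  set r := row i (kermx M).
  have rM : r *m M = 0 by apply/sub_kermxP; rewrite row_sub.
  pose g x := \sum_(j < k | nth 0 s j == x) r 0 j.
  have gn : forall i0 : 'I_k, g (nth 0 s i0) = r 0 i0.
    move=> i0; rewrite /g (eq_bigl (fun j => j == i0)) ?big_pred1_eq // => j.
    by rewrite nth_uniq.
  have : comb s g = 0.
    rewrite combM; apply: etrans rM; congr (_ *m _); apply/rowP => j; by rewrite mxE gn.
  move/hind => H; apply/rowP => j; rewrite [RHS]mxE -gn; apply: H; exact: mem_nth.
have [P MP] := row_freeP rf.
have [m [m0 hm]] := min_pos ha.
pose K := 1 + \sum_(i < k) \sum_(j < n) `|P j i|.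
have K0 : 0 < K.
  by apply: ltr_pwDl => //; apply: sumr_ge0 => i _; apply: sumr_ge0 => j _.
exists (m / K); split; first by apply: divr_gt0.
move=> y hy hd; have [g eg] := spn_aff us hy; subst y.
apply: pos_comb => // x xs.
have ix : (index x s < k)%N by rewrite index_mem.
pose i := Ordinal ix.
have nx : nth 0 s i = x by rewrite /= nth_index.
pose r := \row_(i < k) (g (nth 0 s i) - 1 * a (nth 0 s i)).
set d := comb s g - comb s a.
have rM : r *m M = d by rewrite /d -[comb s a]scale1r -comb_lin combM.
have rd : r = d *m P by rewrite -rM -mulmxA MP mulmx1.
have hdj : forall j, `|d 0 j| < m / K.
  move=> j; have : d 0 j ^+ 2 < (m / K) ^+ 2.
    apply: le_lt_trans hd; rewrite /sqdist (bigD1 j) //= lerDl.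
    by apply: sumr_ge0 => *; apply: sqr_ge0.
  have mK : 0 < m / K by apply: divr_gt0.
  move=> h; rewrite ltr_norml; apply/andP; split; nra.
have h1 : `|r 0 i| <= (m / K) * \sum_(j < n) `|P j i|.
  rewrite rd mxE mulr_sumr; apply: le_trans (ler_norm_sum _ _ _) _.
  apply: ler_sum => j _; rewrite normrM; apply: ler_wpM2r => //.
  exact: ltW.
have h2 : \sum_(j < n) `|P j i| <= K.
  rewrite /K (bigD1 i) //=.
  have : 0 <= \sum_(i' < k | i' != i) \sum_(j < n) `|P j i'|.
    by apply: sumr_ge0 => i' _; apply: sumr_ge0.
  lra.
have h3 : (m / K) * \sum_(j < n) `|P j i| <= m.
  apply: le_trans (_ : m / K * K <= m).
    by apply: ler_wpM2l => //; apply: ltW; apply: divr_gt0.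
  by rewrite divfK // gt_eqF.
have h4 := hm x xs.
move: (lexx `|r 0 i|); rewrite ler_norml => /andP[h5 _].
move: h5 h1; rewrite !mxE nx; lra.
Qed.

End RI.

Lemma comb_scale (R : realType) (n : nat) (s : seq 'rV[R]_n) f k :
  comb s (fun x => k * f x) = k *: comb s f.
Proof. by rewrite /comb scaler_sumr; apply: eq_bigr => x _; rewrite scalerA. Qed.

Theorem lemma2p1 (R : realType) (n : nat) (V1 V2 : seq 'rV[R]_n) :
  (0 \notin V1) -> (0 \notin V2) ->
  (forall x, x \in V1 -> x \notin V2) ->
  (forall u v, u \in V1 ++ V2 -> v \in V1 ++ V2 ->
     forall t : R, 0 < t -> u = t *: v -> u = v) ->
  (exists v, v != 0 /\ pos V1 v /\ pos V2 v) ->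
  exists V1' V2' : seq 'rV[R]_n,
    {subset V1' <= V1} /\ {subset V2' <= V2} /\
    (exists d : 'rV[R]_n, d != 0 /\
       (forall v, (pos V1' v /\ pos V2' v /\ v != 0) <->
                  (exists t : R, 0 < t /\ v = t *: d)) /\
       (forall t : R, 0 < t ->
          relint (pos V1') (t *: d) /\ relint (pos V2') (t *: d))) /\
    ~ conv (V1' ++ V2') 0.
Proof.
move=> _ _ Hdisj _ [v [vn0 [[c1 [c1p e1]] [c2 [c2p e2]]]]].
pose c x := if x \in V1 then c1 x else c2 x.
pose s1 := [seq x <- undup V1 | (0 < c1 x)%R].
pose s2 := [seq x <- undup V2 | (0 < c2 x)%R].
have ev1 : comb s1 c = v.
  rewrite e1 -/(comb (undup V1) c1) -(comb_filter (s:=undup V1) (z:=c1)); last by move=> x _; apply: c1p.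
  apply: comb_eq => x.
  by rewrite mem_filter mem_undup /c => /andP[_ ->].
have ev2 : comb s2 c = v.
  rewrite e2 -/(comb (undup V2) c2) -(comb_filter (s:=undup V2) (z:=c2)); last by move=> x _; apply: c2p.
  apply: comb_eq => x.
  rewrite mem_filter mem_undup /c => /andP[_ xV2].
  by case: ifP => // xV1; move: (Hdisj _ xV1); rewrite xV2.
have hC : Conf V1 V2 s1 s2 c.
  constructor.
  - exact/filter_uniq/undup_uniq.
  - exact/filter_uniq/undup_uniq.
  - by move=> x; rewrite mem_filter mem_undup => /andP[].
  - by move=> x; rewrite mem_filter mem_undup => /andP[].
  - move=> x; rewrite mem_cat !mem_filter !mem_undup /c.
    case/orP => /andP[h1 h2]; first by rewrite h2.
    by case: ifP => // xV1; move: (Hdisj _ xV1); rewrite h2.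
  - by rewrite ev1 ev2.
  - by rewrite ev1.
have [s1' [s2' [c' [hC' hK]]]] := exists_good Hdisj (leqnn _) hC.
case: hC' => u1 u2 sub1 sub2 cpos ceq cne0.
have dis12 : forall x, x \in s2' -> x \notin s1'.
  move=> x xs2; apply/negP => xs1; move: (Hdisj _ (sub1 _ xs1)).
  by rewrite (sub2 _ xs2).
have [y1 y1s] := comb_nonempty cne0.
have [y2 y2s] : exists y, y \in s2' by apply: (comb_nonempty (f:=c')); rewrite -ceq.
have cp1 : forall x, x \in s1' -> 0 < c' x by move=> x xs; apply: cpos; rewrite mem_cat xs.
have cp2 : forall x, x \in s2' -> 0 < c' x by move=> x xs; apply: cpos; rewrite mem_cat xs orbT.
have comb0 : forall s, comb s (fun _ : 'rV[R]_n => 0) = 0.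
  by move=> s; rewrite /comb big1 // => x _; rewrite scale0r.
have ind1 : indep s1'.
  move=> g hg x xs.
  pose gg y := if y \in s1' then g y else 0.
  have : comb s1' gg = comb s2' gg.
    rewrite (comb_eq (g := g)); last by move=> y ys; rewrite /gg ys.
    rewrite hg (comb_eq (g := fun _ => 0)) ?comb0 // => y ys.
    by rewrite /gg (negbTE (dis12 _ ys)).
  move/hK => [k hk].
  have := hk y2; rewrite mem_cat y2s orbT /gg (negbTE (dis12 _ y2s)) => /(_ isT).
  move/esym/eqP; rewrite mulf_eq0 (gt_eqF (cp2 _ y2s)) orbF => /eqP k0.
  by have := hk x; rewrite mem_cat xs /gg xs k0 mul0r => ->.
have ind2 : indep s2'.
  move=> g hg x xs.
  pose gg y := if y \in s2' then g y else 0.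
  have : comb s1' gg = comb s2' gg.
    rewrite [RHS](comb_eq (g := g)); last by move=> y ys; rewrite /gg ys.
    rewrite hg (comb_eq (g := fun _ => 0)) ?comb0 // => y ys.
    by rewrite /gg; case: ifP => // ys2; move: (dis12 _ ys2); rewrite ys.
  move/hK => [k hk].
  have := hk y1; rewrite mem_cat y1s /gg.
  have -> : (y1 \in s2') = false by apply/negP => ys2; move: (dis12 _ ys2); rewrite y1s.
  move=> /(_ isT) /esym/eqP; rewrite mulf_eq0 (gt_eqF (cp1 _ y1s)) orbF => /eqP k0.
  by have := hk x; rewrite mem_cat xs orbT /gg xs k0 mul0r => ->.
exists s1', s2'; split=> //; split=> //; split.
  exists (comb s1' c'); split=> //; split.
    move=> w; split.
      move=> [[f1 [f1p ef1]] [[f2 [f2p ef2]] wn0]].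
      rewrite undup_id // -/(comb s1' f1) in ef1.
      rewrite undup_id // -/(comb s2' f2) in ef2.
      pose gg x := if x \in s1' then f1 x else f2 x.
      have : comb s1' gg = comb s2' gg.
        rewrite (comb_eq (g := f1)); last by move=> y ys; rewrite /gg ys.
        rewrite [RHS](comb_eq (g := f2)) -?ef1 -?ef2 // => y ys.
        by rewrite /gg (negbTE (dis12 _ ys)).
      move/hK => [k hk].
      have ew : w = k *: comb s1' c'.
        rewrite ef1 -comb_scale; apply: comb_eq => x xs.
        by have := hk x; rewrite mem_cat xs /gg xs => ->.
      have k0 : 0 <= k.
        have := hk y1; rewrite mem_cat y1s /gg y1s => /(_ isT) e.
        by have := f1p y1; rewrite e pmulr_lge0 // cp1.
      exists k; split => //; rewrite lt_neqAle k0 andbT; apply/eqP => k0'.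
      by move: wn0; rewrite ew -k0' scale0r eqxx.
    move=> [t [t0 ->]]; split; last split.
    - by rewrite -comb_scale; apply: pos_comb => // x xs; apply: mulr_ge0; [apply: ltW|apply: ltW; apply: cp1].
    - by rewrite ceq -comb_scale; apply: pos_comb => // x xs; apply: mulr_ge0; [apply: ltW|apply: ltW; apply: cp2].
    - by rewrite scaler_eq0 negb_or gt_eqF.
  move=> t t0; split.
    by rewrite -comb_scale; apply: relint_comb => // x xs; apply: mulr_gt0 => //; apply: cp1.
  by rewrite ceq -comb_scale; apply: relint_comb => // x xs; apply: mulr_gt0 => //; apply: cp2.
move=> [f [fp [f1 ef]]].
have u12 : uniq (s1' ++ s2').
  rewrite cat_uniq u1 u2 andbT /=; apply/hasPn => x xs2 /=; exact: dis12.
rewrite undup_id // in f1 ef.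
rewrite big_cat /= in ef.
pose gg x := if x \in s1' then f x else - f x.
have : comb s1' gg = comb s2' gg.
  rewrite (comb_eq (g := f)); last by move=> y ys; rewrite /gg ys.
  rewrite [RHS](comb_eq (g := fun x => - f x)); last by move=> y ys; rewrite /gg (negbTE (dis12 _ ys)).
  by rewrite comb_opp; apply/eqP; rewrite -addr_eq0 /comb -ef.
move/hK => [k hk].
have k0 : 0 <= k.
  have := hk y1; rewrite mem_cat y1s /gg y1s => /(_ isT) e.
  by have := fp y1; rewrite e pmulr_lge0 // cp1.
have k0' : k <= 0.
  have := hk y2; rewrite mem_cat y2s orbT /gg (negbTE (dis12 _ y2s)) => /(_ isT) e.
  have := fp y2; rewrite -oppr_le0 e pmulr_lle0 //; exact: cp2.
have kk : k = 0 by apply/eqP; rewrite eq_le k0 k0'.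
have fz : forall x, x \in s1' ++ s2' -> f x = 0.
  move=> x xs; have := hk x xs; rewrite kk mul0r /gg.
  by case: ifP => // _ /eqP; rewrite oppr_eq0 => /eqP.
move: f1; rewrite big_seq big1 => [|x xs]; last exact: fz.
by move/eqP; rewrite eq_sym oner_eq0.
Qed.
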